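(* There are $2^{\mathfrak{c}}$ many pairwise non-isomorphic (as linear orders under the usual order of $\mathbb{R}$) $\mathfrak{c}$-dense subsets of $\mathbb{R}$ that are closed under Turing equivalence.
   Context: $\mathfrak{c}=2^{\aleph_0}$. A set $A\subseteq\mathbb{R}$ is $\mathfrak{c}$-dense if $|I\cap A|=\mathfrak{c}$ for every nonempty open interval $I$. A set of reals is closed under Turing equivalence if it contains every real Turing equivalent to one of its elements. *)

(* Defs.v *)
From Stdlib Require Import Reals List Arith Cantor.
Import ListNotations.
Open Scope R_scope.

(* Syntax of mu-recursive terms with an oracle call. Arities are not tracked:
   arguments are lists of naturals, missing arguments default to 0. *)
Inductive rterm : Type :=
| RZero : rterm
| RSucc : rterm
| RProj : nat -> rterm
| ROracle : rterm
| RComp : rterm -> list rterm -> rterm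
| RPrim : rterm -> rterm -> rterm
| RMin : rterm -> rterm.

Inductive eval (g : nat -> nat) : rterm -> list nat -> nat -> Prop :=
| ev_zero xs : eval g RZero xs 0
| ev_succ xs : eval g RSucc xs (S (hd 0%nat xs))
| ev_proj i xs : eval g (RProj i) xs (nth i xs 0%nat)
| ev_oracle xs : eval g ROracle xs (g (hd 0%nat xs))
| ev_comp f hs xs ys v :
    evals g hs xs ys -> eval g f ys v -> eval g (RComp f hs) xs v
| ev_prim0 f h xs v :
    eval g f xs v -> eval g (RPrim f h) (0%nat :: xs) v
| ev_primS f h n xs r v :
    eval g (RPrim f h) (n :: xs) r ->
    eval g h (n :: r :: xs) v ->
    eval g (RPrim f h) (S n :: xs) v
| ev_primnil f h v :
    eval g (RPrim f h) [0%nat] v -> eval g (RPrim f h) [] v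
| ev_min f xs n :
    eval g f (n :: xs) 0%nat ->
    (forall m, (m < n)%nat -> exists k, k <> 0%nat /\ eval g f (m :: xs) k) ->
    eval g (RMin f) xs n
with evals (g : nat -> nat) : list rterm -> list nat -> list nat -> Prop :=
| evs_nil xs : evals g [] xs []
| evs_cons h hs xs y ys :
    eval g h xs y -> evals g hs xs ys -> evals g (h :: hs) xs (y :: ys).

Definition Treducible (h g : nat -> nat) : Prop :=
  exists t : rterm, forall n, eval g t [n] (h n).

Definition rat_of_nat (n : nat) : R :=
  let (a, m) := Cantor.of_nat n in
  let (b, d) := Cantor.of_nat m in
  (INR a - INR b) / INR (S d).

(* Characteristic function of the left cut {q in Q | q < x}. *)
Definition cut (x : R) (n : nat) : nat :=
  if Rlt_dec (rat_of_nat n) x then 1%nat else 0%nat.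

Definition Turing_equiv (x y : R) : Prop :=
  Treducible (cut x) (cut y) /\ Treducible (cut y) (cut x).

Definition closed_under_Turing_equiv (A : R -> Prop) : Prop :=
  forall x y, A x -> Turing_equiv x y -> A y.

Definition equipotent (X Y : Type) : Prop :=
  exists f : X -> Y, (forall a b, f a = f b -> a = b) /\ (forall y, exists x, f x = y).

Definition c_dense (A : R -> Prop) : Prop :=
  forall a b : R, a < b -> equipotent {x : R | a < x < b /\ A x} R.

Definition order_isomorphic (A B : R -> Prop) : Prop :=
  exists f : {x : R | A x} -> {x : R | B x},
    (forall a b, f a = f b -> a = b) /\ (forall y, exists x, f x = y) /\
    (forall a b, proj1_sig a < proj1_sig b <-> proj1_sig (f a) < proj1_sig (f b)).

(* Main.v *)
Require Import Defs.
From Stdlib Require Import Reals Lra Lia List Arith Cantor ZArith Classical ClassicalEpsilon FunctionalExtensionality PropExtensionality ProofIrrelevance Relations Wellfounded.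
Import ListNotations.
Open Scope R_scope.

Fixpoint eval_det g t xs v (H : eval g t xs v) {struct H} :
  forall v', eval g t xs v' -> v = v'
with evals_det g hs xs ys (H : evals g hs xs ys) {struct H} :
  forall ys', evals g hs xs ys' -> ys = ys'.
Proof.
- destruct H; intros v' H'.
  + inversion H'; subst; reflexivity.
  + inversion H'; subst; reflexivity.
  + inversion H'; subst; reflexivity.
  + inversion H'; subst; reflexivity.
  + inversion H'; subst.
    assert (ys = ys0) by (apply (evals_det _ _ _ _ H); assumption). subst.
    apply (eval_det _ _ _ _ H0); assumption.
  + inversion H'; subst. apply (eval_det _ _ _ _ H); assumption.
  + inversion H'; subst.
    assert (r = r0) by (apply (eval_det _ _ _ _ H); assumption). subst.
    apply (eval_det _ _ _ _ H0); assumption.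
  + inversion H'; subst. apply (eval_det _ _ _ _ H); assumption.
  + inversion H' as [| | | | | | | |f0 xs0 n0 E0 Hall0]; subst.
    destruct (lt_eq_lt_dec n v') as [[Hlt|Heq]|Hgt].
    * destruct (Hall0 n Hlt) as [k [Hk Dk]].
      exfalso. apply Hk. symmetry. apply (eval_det _ _ _ _ H); assumption.
    * assumption.
    * destruct (H0 v' Hgt) as [k [Hk Dk]].
      exfalso. apply Hk. apply (eval_det _ _ _ _ Dk); assumption.
- destruct H; intros ys' H'.
  + inversion H'; reflexivity.
  + inversion H'; subst.
    f_equal.
    * apply (eval_det _ _ _ _ H); assumption.
    * apply (evals_det _ _ _ _ H0); assumption.
Qed.

Fixpoint enc (t : rterm) : nat :=
  match t with
  | RZero => Cantor.to_nat (0, 0)%nat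
  | RSucc => Cantor.to_nat (1, 0)%nat
  | RProj i => Cantor.to_nat (2, i)%nat
  | ROracle => Cantor.to_nat (3, 0)%nat
  | RComp f hs => Cantor.to_nat (4, Cantor.to_nat (enc f,
       (fix encl (l : list rterm) : nat := match l with
          | [] => 0%nat | h :: l' => S (Cantor.to_nat (enc h, encl l')) end) hs))%nat
  | RPrim f h => Cantor.to_nat (5, Cantor.to_nat (enc f, enc h))%nat
  | RMin f => Cantor.to_nat (6, enc f)%nat
  end.

Fixpoint encl (l : list rterm) : nat :=
  match l with [] => 0%nat | h :: l' => S (Cantor.to_nat (enc h, encl l')) end.

Lemma to_nat_inj a b c d : Cantor.to_nat (a, b) = Cantor.to_nat (c, d) -> a = c /\ b = d.
Proof.
  intro H. assert (E := f_equal Cantor.of_nat H).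
  rewrite !Cantor.cancel_of_to in E. inversion E. auto.
Qed.

Arguments Cantor.to_nat : simpl never.
Fixpoint enc_inj (t : rterm) : forall u, enc t = enc u -> t = u.
Proof.
  destruct t; intros u H; destruct u; simpl in H;
    try (apply to_nat_inj in H; destruct H as [H1 H2]; discriminate H1);
    try reflexivity.
  + apply to_nat_inj in H; destruct H as [_ H]; subst; reflexivity.
  + apply to_nat_inj in H; destruct H as [_ H].
    apply to_nat_inj in H; destruct H as [H1 H2].
    apply enc_inj in H1. subst.
    fold encl in H2. change (encl l = encl l0) in H2.
    f_equal.
    refine ((fix aux (l1 : list rterm) : forall m, encl l1 = encl m -> l1 = m := _) l l0 H2).
    destruct l1 as [|h l1]; intros m Hm; destruct m as [|h' m]; simpl in Hm;
      try discriminate; try reflexivity.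
    injection Hm as Hm. apply to_nat_inj in Hm. destruct Hm as [E1 E2].
    apply enc_inj in E1. apply aux in E2. subst. reflexivity.
  + apply to_nat_inj in H; destruct H as [_ H].
    apply to_nat_inj in H; destruct H as [H1 H2].
    apply enc_inj in H1. apply enc_inj in H2. subst. reflexivity.
  + apply to_nat_inj in H; destruct H as [_ H].
    apply enc_inj in H. subst. reflexivity.
Qed.

Lemma encl_inj (l : list rterm) : forall m, encl l = encl m -> l = m.
Proof.
  induction l as [|h l IH]; intros m Hm; destruct m as [|h' m]; simpl in Hm;
      try discriminate; try reflexivity.
  injection Hm as Hm. apply to_nat_inj in Hm. destruct Hm as [E1 E2].
  apply enc_inj in E1. apply IH in E2. subst. reflexivity.
Qed.

Lemma rat_of_nat_spec a b d :
  rat_of_nat (Cantor.to_nat (a, Cantor.to_nat (b, d))) = (INR a - INR b) / INR (S d).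
Proof.
  unfold rat_of_nat. rewrite Cantor.cancel_of_to. rewrite Cantor.cancel_of_to. reflexivity.
Qed.

Lemma rat_dense : forall x y, x < y -> exists n, x < rat_of_nat n < y.
Proof.
  intros x y Hxy.
  destruct (archimed (/ (y - x))) as [H1 _].
  set (z := up (/ (y - x))) in *.
  assert (Hyx : 0 < / (y - x)) by (apply Rinv_0_lt_compat; lra).
  assert (Hz : (0 < z)%Z) by (apply lt_IZR; lra).
  set (d := Z.to_nat z).
  assert (Hd : INR (S d) = IZR z + 1).
  { rewrite S_INR. unfold d. rewrite INR_IZR_INZ. rewrite Z2Nat.id by lia. reflexivity. }
  destruct (archimed (x * INR (S d))) as [H2 H3].
  set (m := up (x * INR (S d))) in *.
  exists (Cantor.to_nat (Z.to_nat m, Cantor.to_nat (Z.to_nat (- m), d))).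
  rewrite rat_of_nat_spec.
  assert (Hm : INR (Z.to_nat m) - INR (Z.to_nat (- m)) = IZR m).
  { clear. destruct m as [|p|p]; simpl Z.opp.
    - simpl. lra.
    - rewrite Z2Nat.inj_neg. simpl (INR 0). rewrite INR_IZR_INZ.
      rewrite Z2Nat.id by lia. lra.
    - rewrite Z2Nat.inj_neg. simpl (INR 0). rewrite INR_IZR_INZ.
      rewrite Z2Nat.id by lia. rewrite <- Pos2Z.opp_pos, opp_IZR. lra. }
  rewrite Hm.
  assert (HS : 0 < INR (S d)) by (apply lt_0_INR; lia).
  split.
  - apply (Rmult_lt_reg_r (INR (S d))); auto.
    unfold Rdiv. rewrite Rmult_assoc, Rinv_l by lra. lra.
  - apply (Rmult_lt_reg_r (INR (S d))); auto.
    unfold Rdiv. rewrite Rmult_assoc, Rinv_l by lra. rewrite Rmult_1_r.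
    assert (1 < (y - x) * INR (S d)).
    { rewrite Hd. 
      assert (/ (y - x) * (y - x) = 1) by (field; lra).
      assert ((y - x) * / (y - x) < (y - x) * (IZR z + 1)).
      { apply Rmult_lt_compat_l; lra. }
      rewrite Rinv_r in H0 by lra. lra. }
    nra.
Qed.

Lemma cut_inj : forall x y, (forall n, cut x n = cut y n) -> x = y.
Proof.
  intros x y H.
  destruct (Rtotal_order x y) as [Hlt|[Heq|Hgt]]; auto; exfalso.
  - destruct (rat_dense x y Hlt) as [n [Hn1 Hn2]].
    specialize (H n). unfold cut in H.
    destruct (Rlt_dec (rat_of_nat n) x); destruct (Rlt_dec (rat_of_nat n) y);
      try discriminate; lra.
  - destruct (rat_dense y x Hgt) as [n [Hn1 Hn2]].
    specialize (H n). unfold cut in H.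
    destruct (Rlt_dec (rat_of_nat n) x); destruct (Rlt_dec (rat_of_nat n) y);
      try discriminate; lra.
Qed.

Definition CS := nat -> bool.

Fixpoint ps (b : CS) (N : nat) : R :=
  match N with
  | O => 0
  | S N => ps b N + (if b N then 1 else 0) * (/3) ^ N
  end.

Lemma ps_mono b m k : ps b m <= ps b (m + k)%nat.
Proof.
  induction k. rewrite Nat.add_0_r; lra.
  rewrite Nat.add_succ_r. simpl.
  assert (0 <= (/3)^(m+k)%nat) by (apply pow_le; lra).
  destruct (b (m + k)%nat); lra.
Qed.

Lemma ps_tail b m k : ps b (m + k)%nat <= ps b m + (/3)^m * (3/2) * (1 - (/3)^k).
Proof.
  induction k. rewrite Nat.add_0_r. simpl. lra.
  rewrite Nat.add_succ_r. simpl. rewrite pow_add.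
  assert (0 <= (/3)^m) by (apply pow_le; lra).
  assert (0 <= (/3)^k) by (apply pow_le; lra).
  assert (E: (/3)^m * (3/2) * (1 - / 3 * (/3)^k) =
             (/3)^m * (3/2) * (1 - (/3)^k) + (/3)^m * (/3)^k) by field.
  rewrite E.
  assert (0 <= (/3)^m * (/3)^k) by (apply Rmult_le_pos; auto).
  destruct (b (m + k)%nat); lra.
Qed.

Lemma ps_bound b N : 0 <= ps b N <= 3/2.
Proof.
  split.
  - pose proof (ps_mono b 0 N). simpl in H. lra.
  - pose proof (ps_tail b 0 N). simpl in H.
    assert (0 <= (/3)^N) by (apply pow_le; lra). lra.
Qed.

Definition iota (b : CS) : R.
Proof.
  refine (proj1_sig (completeness (fun y => exists N, y = ps b N) _ _)).
  - exists (3/2). intros y [N ->]. apply ps_bound.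
  - exists 0. exists 0%nat. reflexivity.
Defined.

Lemma iota_spec b : is_lub (fun y => exists N, y = ps b N) (iota b).
Proof. unfold iota. destruct completeness. simpl. assumption. Qed.

Lemma iota_bound b : 0 <= iota b <= 3/2.
Proof.
  destruct (iota_spec b) as [H1 H2]. split.
  - apply H1. exists 0%nat. reflexivity.
  - apply H2. intros y [N ->]. apply ps_bound.
Qed.

Lemma ps_agree b b' m : (forall i, (i < m)%nat -> b i = b' i) -> ps b m = ps b' m.
Proof.
  induction m; intros H; simpl. reflexivity.
  rewrite IHm by (intros; apply H; lia). rewrite H by lia. reflexivity.
Qed.

Lemma iota_lt b b' m : (forall i, (i < m)%nat -> b i = b' i) -> b m = true -> b' m = false ->
  iota b' < iota b.
Proof.
  intros Hag Hb Hb'.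
  assert (E := ps_agree b b' m Hag).
  assert (P3 : 0 < (/3)^m) by (apply pow_lt; lra).
  assert (L1 : ps b m + (/3)^m <= iota b).
  { destruct (iota_spec b) as [H1 _]. apply H1. exists (S m). simpl. rewrite Hb. lra. }
  assert (L2 : iota b' <= ps b m + (/3)^m / 2).
  { destruct (iota_spec b') as [_ H2]. apply H2. intros y [N ->].
    destruct (le_lt_dec N (S m)) as [HN|HN].
    - replace (S m) with (N + (S m - N))%nat by lia.
      eapply Rle_trans. apply ps_mono.
      replace (N + (S m - N))%nat with (S m) by lia. simpl. rewrite Hb'. rewrite E. lra.
    - replace N with (S m + (N - S m))%nat by lia.
      eapply Rle_trans. apply ps_tail. simpl. rewrite Hb'. rewrite <- E.
      assert (0 <= (/3)^(N - S m)) by (apply pow_le; lra).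
      assert (0 <= / 3 * (/ 3) ^ m * (3 / 2) * (/ 3) ^ (N - S m)).
      { apply Rmult_le_pos; [|lra]. apply Rmult_le_pos; [|lra]. apply Rmult_le_pos; [lra|]. apply pow_le; lra. }
      lra. }
  lra.
Qed.

Lemma first_diff (b b' : CS) i : b i <> b' i ->
  exists m, b m <> b' m /\ forall j, (j < m)%nat -> b j = b' j.
Proof.
  induction i as [i IH] using (well_founded_induction Wf_nat.lt_wf).
  intros Hi.
  destruct (classic (forall j, (j < i)%nat -> b j = b' j)) as [H|H].
  - exists i. auto.
  - apply not_all_ex_not in H. destruct H as [j Hj].
    apply imply_to_and in Hj. destruct Hj as [Hj1 Hj2].
    apply (IH j Hj1 Hj2).
Qed.

Lemma iota_inj b b' : iota b = iota b' -> b = b'.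
Proof.
  intros E. apply functional_extensionality. intros i.
  destruct (Bool.bool_dec (b i) (b' i)) as [e|ne]; auto. exfalso.
  destruct (first_diff b b' i ne) as [m [Hm Hag]].
  destruct (b m) eqn:Hbm; destruct (b' m) eqn:Hbm'; try congruence.
  - pose proof (iota_lt b b' m Hag Hbm Hbm'). lra.
  - assert (Hag' : forall j, (j < m)%nat -> b' j = b j) by (intros; symmetry; auto).
    pose proof (iota_lt b' b m Hag' Hbm' Hbm). lra.
Qed.

Definition emb (a c : R) (b : CS) : R := a + (c - a) * ((iota b + 1) / 3).

Lemma emb_in a c b : a < c -> a < emb a c b < c.
Proof.
  intros H. unfold emb. pose proof (iota_bound b).
  assert (0 < (c - a) * ((iota b + 1)/3)) by (apply Rmult_lt_0_compat; lra).
  assert ((c - a) * ((iota b + 1)/3) < (c - a)).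
  { rewrite <- (Rmult_1_r (c - a)) at 2. apply Rmult_lt_compat_l; lra. }
  lra.
Qed.

Lemma emb_inj a c b b' : a < c -> emb a c b = emb a c b' -> b = b'.
Proof.
  intros H E. apply iota_inj. unfold emb in E.
  assert ((c - a) * ((iota b + 1) / 3) = (c - a) * ((iota b' + 1) / 3)) by lra.
  apply Rmult_eq_reg_l in H0; lra.
Qed.

Definition injective {A B} (f : A -> B) := forall a b, f a = f b -> a = b.
Definition small {T} (S : T -> Prop) :=
  ~ exists g : CS -> T, injective g /\ forall c, S (g c).

Definition pairC (F : nat -> CS) : CS :=
  fun n => F (fst (Cantor.of_nat n)) (snd (Cantor.of_nat n)).

Lemma pairC_inj : injective pairC.
Proof.
  intros F F' E. apply functional_extensionality; intro i.
  apply functional_extensionality; intro j.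
  assert (H := f_equal (fun G => G (Cantor.to_nat (i, j))) E). cbv beta in H.
  unfold pairC in H. rewrite Cantor.cancel_of_to in H. exact H.
Qed.

Lemma small_sub {T} (S S' : T -> Prop) : (forall z, S z -> S' z) -> small S' -> small S.
Proof. intros H HS [g [gi gS]]. apply HS. exists g. split; auto. Qed.

Lemma small_Union {T} (A : nat -> T -> Prop) :
  (forall n, small (A n)) -> small (fun z => exists n, A n z).
Proof.
  intros HA [g [gi gA]].
  set (G := fun F => g (pairC F)).
  assert (Gi : injective G) by (intros F F' E; apply pairC_inj, gi, E).
  assert (Ex : forall n, exists c, ~ exists F : nat -> CS, F n = c /\ A n (G F)).
  { intro n. apply NNPP. intro Hn.
    assert (Hc : forall c, exists F : nat -> CS, F n = c /\ A n (G F)).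
    { intro c. apply NNPP. intro Hc. apply Hn. exists c. exact Hc. }
    apply (HA n). exists (fun c => G (proj1_sig (constructive_indefinite_description _ (Hc c)))).
    split.
    - intros c c' E. apply Gi in E.
      destruct (constructive_indefinite_description _ (Hc c)) as [F [HF1 HF2]].
      destruct (constructive_indefinite_description _ (Hc c')) as [F' [HF1' HF2']].
      simpl in E. subst. reflexivity.
    - intro c. destruct (constructive_indefinite_description _ (Hc c)) as [F [HF1 HF2]]. exact HF2. }
  set (Fs := fun n => proj1_sig (constructive_indefinite_description _ (Ex n))).
  destruct (gA (pairC Fs)) as [m Hm].
  assert (Hs := proj2_sig (constructive_indefinite_description _ (Ex m))). simpl in Hs.
  apply Hs. exists Fs. split; [reflexivity|exact Hm].
Qed.

Lemma small_union2 {T} (A B : T -> Prop) : small A -> small B -> small (fun z => A z \/ B z).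
Proof.
  intros HA HB.
  apply (small_sub _ (fun z => exists n, (match n with O => A | S _ => B end) z)).
  - intros z [H|H]; [exists O|exists 1%nat]; exact H.
  - apply small_Union. intros [|n]; auto.
Qed.

Lemma small_image {T U} (S : T -> Prop) (f : T -> U) :
  small S -> small (fun y => exists z, S z /\ y = f z).
Proof.
  intros HS [g [gi gS]]. apply HS.
  exists (fun c => proj1_sig (constructive_indefinite_description _ (gS c))). split.
  - intros c c' E.
    destruct (constructive_indefinite_description _ (gS c)) as [z [Hz1 Hz2]].
    destruct (constructive_indefinite_description _ (gS c')) as [z' [Hz1' Hz2']].
    simpl in E. subst. apply gi. congruence.
  - intro c. destruct (constructive_indefinite_description _ (gS c)) as [z [Hz1 Hz2]]. exact Hz1.
Qed.

Lemma small_single {T} (a : T) : small (fun z => z = a).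
Proof.
  intros [g [gi gS]].
  assert (E : g (fun _ => true) = g (fun _ => false)) by (rewrite (gS (fun _ => true)), (gS (fun _ => false)); reflexivity).
  apply gi in E. assert (H := f_equal (fun h => h O) E). simpl in H. discriminate.
Qed.

Lemma small_preimage {T U} (f : T -> U) (S : U -> Prop) :
  injective f -> small S -> small (fun z => S (f z)).
Proof.
  intros fi HS [g [gi gS]]. apply HS. exists (fun c => f (g c)). split; auto.
  intros c c' E. apply gi, fi, E.
Qed.

Lemma avoid {T} (A B : T -> Prop) : ~ small A -> small B -> exists z, A z /\ ~ B z.
Proof.
  intros HA HB. apply NNPP. intro H. apply HA.
  apply (small_sub _ B); auto.
  intros z Az. apply NNPP. intro Bz. apply H. exists z. auto.
Qed.

Lemma not_small_inj {T} (S : T -> Prop) (g : CS -> T) :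
  injective g -> (forall c, S (g c)) -> ~ small S.
Proof. intros gi gS HS. apply HS. exists g. auto. Qed.

Lemma schroeder_bernstein {X Y} (f : X -> Y) (g : Y -> X) :
  injective f -> injective g ->
  exists h : X -> Y, (forall a b, h a = h b -> a = b) /\ (forall y, exists x, h x = y).
Proof.
  intros fi gi.
  set (Cn := fix Cn (n : nat) : X -> Prop :=
         match n with
         | O => fun x => ~ exists y, g y = x
         | S n => fun x => exists x', Cn n x' /\ x = g (f x')
         end).
  set (Cs := fun x => exists n, Cn n x).
  set (ginv := fun x => epsilon (inhabits (f x)) (fun y => g y = x)).
  assert (Hginv : forall x, ~ Cs x -> g (ginv x) = x).
  { intros x Hx. unfold ginv. apply epsilon_spec. apply NNPP. intro H. apply Hx. exists O. exact H. }
  set (h := fun x => match excluded_middle_informative (Cs x) with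
                     | left _ => f x | right _ => ginv x end).
  exists h. split.
  - intros a b E. unfold h in E.
    destruct (excluded_middle_informative (Cs a)) as [Ca|Ca];
    destruct (excluded_middle_informative (Cs b)) as [Cb|Cb].
    + apply fi; exact E.
    + exfalso. apply Cb. destruct Ca as [n Hn]. exists (S n). simpl. exists a. split; auto.
      rewrite E. symmetry. apply Hginv; auto.
    + exfalso. apply Ca. destruct Cb as [n Hn]. exists (S n). simpl. exists b. split; auto.
      rewrite <- E. symmetry. apply Hginv; auto.
    + rewrite <- (Hginv a Ca), <- (Hginv b Cb). rewrite E. reflexivity.
  - intro y. destruct (classic (Cs (g y))) as [Hc|Hc].
    + destruct Hc as [[|n] Hn].
      * exfalso. apply Hn. exists y. reflexivity.
      * destruct Hn as [x' [Hx' E]]. apply gi in E. exists x'. unfold h.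
        destruct (excluded_middle_informative (Cs x')) as [Cx|Cx].
        -- auto.
        -- exfalso. apply Cx. exists n. exact Hx'.
    + exists (g y). unfold h. destruct (excluded_middle_informative (Cs (g y))) as [Cx|Cx].
      * contradiction.
      * apply gi. apply Hginv. exact Cx.
Qed.

Definition Sx (k : nat -> R) (x : R) := fun y => exists n, rat_of_nat n < x /\ y = k n.
Definition Hk (k : nat -> R) (x : R) : R := epsilon (inhabits 0) (fun L => is_lub (Sx k x) L).
Definition kmono (k : nat -> R) := forall n m, rat_of_nat n < rat_of_nat m -> k n < k m.

Lemma Hk_lub k x : kmono k -> is_lub (Sx k x) (Hk k x).
Proof.
  intros Hm. unfold Hk. apply epsilon_spec.
  destruct (rat_dense x (x + 1)) as [m [Hm1 Hm2]]; [lra|].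
  destruct (rat_dense (x - 1) x) as [n0 [Hn1 Hn2]]; [lra|].
  destruct (completeness (Sx k x)) as [L HL].
  - exists (k m). intros y [n [Hn ->]]. left. apply Hm. lra.
  - exists (k n0). exists n0. split; auto.
  - exists L. exact HL.
Qed.

Lemma Hk_strict k x y : kmono k -> x < y -> Hk k x < Hk k y.
Proof.
  intros Hm Hxy.
  destruct (rat_dense x y Hxy) as [n1 [H1 H2]].
  destruct (rat_dense (rat_of_nat n1) y H2) as [n2 [H3 H4]].
  assert (A : Hk k x <= k n1).
  { destruct (Hk_lub k x Hm) as [_ Hub]. apply Hub. intros z [n [Hn ->]].
    left. apply Hm. lra. }
  assert (B : k n2 <= Hk k y).
  { destruct (Hk_lub k y Hm) as [Hub _]. apply Hub. exists n2. split; auto. }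
  assert (k n1 < k n2) by (apply Hm; auto). lra.
Qed.

Definition iso (A B : R -> Prop) (phi : R -> R) :=
  (forall z, A z -> B (phi z)) /\ (forall w, B w -> exists z, A z /\ phi z = w) /\
  (forall z z', A z -> A z' -> (z < z' <-> phi z < phi z')).

Lemma iso_of_order_iso A B : order_isomorphic A B -> exists phi, iso A B phi.
Proof.
  intros [f [fi [fs fo]]].
  set (phi := fun z => match excluded_middle_informative (A z) with
                       | left h => proj1_sig (f (exist _ z h)) | right _ => 0 end).
  assert (Hphi : forall z (h : A z), phi z = proj1_sig (f (exist _ z h))).
  { intros z h. unfold phi. destruct (excluded_middle_informative (A z)) as [h'|h'].
    - rewrite (proof_irrelevance _ h h'). reflexivity.
    - contradiction. }
  exists phi. split; [|split].
  - intros z h. rewrite (Hphi z h). apply proj2_sig.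
  - intros w h. destruct (fs (exist _ w h)) as [[z hz] E]. exists z. split; auto.
    rewrite (Hphi z hz). rewrite E. reflexivity.
  - intros z z' h h'. rewrite (Hphi z h), (Hphi z' h').
    apply (fo (exist _ z h) (exist _ z' h')).
Qed.

Lemma iso_sym A B phi : iso A B phi -> exists psi, iso B A psi.
Proof.
  intros [H1 [H2 H3]].
  assert (Hinv : forall w, exists z, B w -> A z /\ phi z = w).
  { intro w. destruct (classic (B w)) as [h|h].
    - destruct (H2 w h) as [z Hz]. exists z. auto.
    - exists 0. intro; contradiction. }
  set (psi := fun w => proj1_sig (constructive_indefinite_description _ (Hinv w))).
  assert (Hpsi : forall w, B w -> A (psi w) /\ phi (psi w) = w).
  { intros w h. unfold psi. destruct (constructive_indefinite_description _ (Hinv w)) as [z Hz].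
    simpl. auto. }
  exists psi. split; [|split].
  - intros w h. apply Hpsi; auto.
  - intros z h. exists (phi z). split; auto.
    destruct (Hpsi (phi z) (H1 z h)) as [Ha Hb].
    destruct (Rtotal_order (psi (phi z)) z) as [L|[E|G]]; auto.
    + apply (H3 _ _ Ha h) in L. lra.
    + apply (H3 _ _ h Ha) in G. lra.
  - intros w w' h h'. destruct (Hpsi w h) as [Ha Hb]. destruct (Hpsi w' h') as [Ha' Hb'].
    rewrite (H3 _ _ Ha Ha'). rewrite Hb, Hb'. tauto.
Qed.

Lemma iso_kmono A B phi : iso A B phi -> (forall n, A (rat_of_nat n)) ->
  kmono (fun n => phi (rat_of_nat n)).
Proof.
  intros [_ [_ H3]] HA n m Hnm. apply (H3 _ _ (HA n) (HA m)); auto.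
Qed.

Lemma Hk_eq A B phi z : iso A B phi -> (forall n, A (rat_of_nat n)) ->
  (forall a b, a < b -> exists w, a < w < b /\ B w) ->
  A z -> Hk (fun n => phi (rat_of_nat n)) z = phi z.
Proof.
  intros Hiso HA HB Az.
  assert (Hm := iso_kmono A B phi Hiso HA).
  destruct Hiso as [H1 [H2 H3]].
  destruct (Hk_lub _ z Hm) as [Hub Hlub].
  assert (L1 : Hk (fun n => phi (rat_of_nat n)) z <= phi z).
  { apply Hlub. intros y [n [Hn ->]]. left. apply (H3 _ _ (HA n) Az); auto. }
  destruct L1 as [L1|L1]; auto. exfalso.
  destruct (HB _ _ L1) as [w [[Hw1 Hw2] Bw]].
  destruct (H2 w Bw) as [z' [Az' <-]].
  assert (z' < z) by (apply (H3 _ _ Az' Az); auto).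
  destruct (rat_dense z' z H) as [n [Hn1 Hn2]].
  assert (phi (rat_of_nat n) <= Hk (fun n => phi (rat_of_nat n)) z).
  { apply Hub. exists n. split; auto. }
  assert (phi z' < phi (rat_of_nat n)) by (apply (H3 _ _ Az' (HA n)); auto).
  lra.
Qed.

Definition Tstar := clos_refl_sym_trans R Turing_equiv.

Definition Phi (a : R) (t : rterm) : R :=
  epsilon (inhabits a) (fun z => forall n, eval (cut a) t [n] (cut z n)).

Lemma Phi_spec a z : Turing_equiv a z -> exists t, Phi a t = z.
Proof.
  intros [_ [t Ht]]. exists t. unfold Phi.
  assert (Hs : forall n, eval (cut a) t [n] (cut (epsilon (inhabits a)
     (fun z => forall n, eval (cut a) t [n] (cut z n))) n)).
  { apply (epsilon_spec (inhabits a) (fun z => forall n, eval (cut a) t [n] (cut z n))).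
    exists z. exact Ht. }
  apply cut_inj. intro n. eapply eval_det; eauto.
Qed.

Fixpoint Psi (a : R) (l : list rterm) : R :=
  match l with [] => a | t :: l' => Psi (Phi a t) l' end.

Lemma Tstar_Psi a z : Tstar a z -> exists l, Psi a l = z.
Proof.
  intro H. apply clos_rst_rst1n_iff in H.
  induction H as [x|x y z Hxy Hyz IH].
  - exists []. reflexivity.
  - destruct IH as [l Hl].
    assert (Te : Turing_equiv x y) by (destruct Hxy as [H|[H1 H2]]; [exact H| split; auto]).
    destruct (Phi_spec x y Te) as [t Ht]. exists (t :: l). simpl. rewrite Ht. exact Hl.
Qed.

Definition dec (n : nat) : list rterm := epsilon (inhabits []) (fun l => encl l = n).

Lemma Tstar_nat a z : Tstar a z -> exists n, Psi a (dec n) = z.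
Proof.
  intro H. destruct (Tstar_Psi a z H) as [l Hl]. exists (encl l).
  assert (E : dec (encl l) = l).
  { apply encl_inj. unfold dec. apply (epsilon_spec (inhabits []) (fun l0 => encl l0 = encl l)).
    exists l. reflexivity. }
  rewrite E. exact Hl.
Qed.

Lemma Tstar_refl a : Tstar a a.
Proof. apply rst_refl. Qed.
Lemma Tstar_sym a b : Tstar a b -> Tstar b a.
Proof. apply rst_sym. Qed.
Lemma Tstar_step a b c : Tstar a b -> Turing_equiv b c -> Tstar a c.
Proof. intros H1 H2. eapply rst_trans. exact H1. apply rst_step. exact H2. Qed.

Definition J := nat -> R.
Definition bitsR (x : R) : CS := fun n => Nat.eqb (cut x n) 1.
Definition jC (s : J) : CS := pairC (fun i => bitsR (s i)).

Lemma bitsR_inj : injective bitsR.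
Proof.
  intros x y E. apply cut_inj. intro n.
  assert (H := f_equal (fun b => b n) E). unfold bitsR in H. simpl in H.
  unfold cut in *. destruct (Rlt_dec (rat_of_nat n) x); destruct (Rlt_dec (rat_of_nat n) y);
    simpl in H; auto; discriminate.
Qed.

Lemma jC_inj : injective jC.
Proof.
  intros s s' E. unfold jC in E. apply pairC_inj in E. apply functional_extensionality. intro i.
  apply bitsR_inj. exact (f_equal (fun F => F i) E).
Qed.

Definition tk (s : J) : nat -> R := fun n => s (S (S n)).
Definition D' (z : R) := exists n, Tstar (rat_of_nat n) z.

Section Main.
Context (I : Type) (lt : I -> I -> Prop) (Hwf : well_founded lt)
  (Htri : forall a b, lt a b \/ a = b \/ lt b a)
  (Hseg : forall i, small (fun j => lt j i)) (e : CS -> I) (ei : injective e).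

Definition stage (s : J) : I := e (jC s).
Definition sigma (i : I) : J := epsilon (inhabits (fun _ => 0)) (fun s => stage s = i).

Lemma sigma_stage s : sigma (stage s) = s.
Proof.
  apply jC_inj. apply ei. unfold sigma.
  apply (epsilon_spec (inhabits (fun _ => 0)) (fun s0 => stage s0 = stage s)).
  exists s. reflexivity.
Qed.

Definition Hs (i : I) := Hk (tk (sigma i)).

Definition Good (i : I) (U : R -> Prop) (x : R) :=
  (sigma i 0%nat = 0 -> sigma i 1%nat < sigma i 2%nat -> sigma i 1%nat < x < sigma i 2%nat) /\
  ~ U x /\ (sigma i 0%nat <> 0 -> injective (Hs i) -> ~ U (Hs i x)).

Definition Uof (i : I) (rec : forall j, lt j i -> R) (z : R) :=
  D' z \/ exists j (h : lt j i), Tstar (rec j h) z \/ Tstar (Hs j (rec j h)) z.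

Definition Fstep (i : I) (rec : forall j, lt j i -> R) : R :=
  epsilon (inhabits 0) (Good i (Uof i rec)).

Definition xs : I -> R := Fix Hwf (fun _ => R) Fstep.

Definition U (i : I) (z : R) :=
  D' z \/ exists j, lt j i /\ (Tstar (xs j) z \/ Tstar (Hs j (xs j)) z).

Lemma xs_eq i : xs i = epsilon (inhabits 0) (Good i (U i)).
Proof.
  unfold xs. rewrite Fix_eq.
  - unfold Fstep. f_equal. f_equal. apply functional_extensionality. intro z.
    apply propositional_extensionality. unfold Uof, U. split.
    + intros [H|[j [h H]]]; [left; auto|right; exists j; auto].
    + intros [H|[j [h H]]]; [left; auto|right; exists j, h; auto].
  - intros x f g Hfg. unfold Fstep, Uof.
    assert (E : f = g).
    { apply functional_extensionality_dep; intro y. apply functional_extensionality; intro p. apply Hfg. }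
    rewrite E. reflexivity.
Qed.

Lemma U_small i : small (U i).
Proof.
  set (A := fun n z =>
     z = Psi (rat_of_nat (fst (Cantor.of_nat n))) (dec (snd (Cantor.of_nat n))) \/
     ((exists j, lt j i /\ z = Psi (xs j) (dec n)) \/
      (exists j, lt j i /\ z = Psi (Hs j (xs j)) (dec n)))).
  apply (small_sub _ (fun z => exists n, A n z)).
  - intros z [[m Hm]|[j [Hj [H|H]]]].
    + destruct (Tstar_nat _ _ Hm) as [n' Hn']. exists (Cantor.to_nat (m, n')).
      left. rewrite Cantor.cancel_of_to. simpl. auto.
    + destruct (Tstar_nat _ _ H) as [n' Hn']. exists n'. right; left. exists j. auto.
    + destruct (Tstar_nat _ _ H) as [n' Hn']. exists n'. right; right. exists j. auto.
  - apply small_Union. intro n. apply small_union2; [apply small_single|].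
    apply small_union2.
    + apply (small_image (fun j => lt j i) (fun j => Psi (xs j) (dec n))). apply Hseg.
    + apply (small_image (fun j => lt j i) (fun j => Psi (Hs j (xs j)) (dec n))). apply Hseg.
Qed.

Lemma Good_exists i : exists x, Good i (U i) x.
Proof.
  set (Rg := fun z => sigma i 0%nat = 0 -> sigma i 1%nat < sigma i 2%nat ->
                      sigma i 1%nat < z < sigma i 2%nat).
  assert (NR : ~ small Rg).
  { destruct (classic (sigma i 0%nat = 0 /\ sigma i 1%nat < sigma i 2%nat)) as [[H1 H2]|Hn].
    - apply (not_small_inj _ (emb (sigma i 1%nat) (sigma i 2%nat))).
      + intros b b' E. eapply emb_inj; eauto.
      + intros c _ _. apply emb_in; auto.
    - apply (not_small_inj _ (emb 0 1)).
      + intros b b' E. eapply emb_inj; [|eauto]. lra.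
      + intros c H1 H2. exfalso. apply Hn; auto. }
  set (Bad := fun z => U i z \/ (sigma i 0%nat <> 0 /\ injective (Hs i) /\ U i (Hs i z))).
  assert (SB : small Bad).
  { destruct (classic (injective (Hs i))) as [Hinj|Hinj].
    - apply (small_sub _ (fun z => U i z \/ U i (Hs i z))).
      + intros z [H|[_ [_ H]]]; auto.
      + apply small_union2. apply U_small. apply small_preimage; auto. apply U_small.
    - apply (small_sub _ (U i)).
      + intros z [H|[_ [H _]]]; auto. contradiction.
      + apply U_small. }
  destruct (avoid Rg Bad NR SB) as [z [Hz1 Hz2]].
  exists z. split; [exact Hz1|split].
  - intro H. apply Hz2. left. auto.
  - intros H1 H2 H3. apply Hz2. right. auto.
Qed.

Lemma xs_good i : Good i (U i) (xs i).
Proof.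
  rewrite xs_eq. apply epsilon_spec. apply Good_exists.
Qed.

Definition Legit (P : R -> Prop) (i : I) :=
  sigma i 0%nat = 0 \/ (sigma i 0%nat <> 0 /\ P (sigma i 1%nat)).

Definition FF (P : R -> Prop) (z : R) := D' z \/ exists i, Legit P i /\ Tstar (xs i) z.

Lemma FF_closed P : closed_under_Turing_equiv (FF P).
Proof.
  intros x y [[n Hn]|[i [Hi Hx]]] Hxy.
  - left. exists n. eapply Tstar_step; eauto.
  - right. exists i. split; auto. eapply Tstar_step; eauto.
Qed.

Definition dens (a b r : R) : J := fun n =>
  match n with O => 0 | S O => a | S (S O) => b | S (S (S O)) => r | _ => 0 end.

Lemma dens_in P a b r : a < b ->
  a < xs (stage (dens a b r)) < b /\ FF P (xs (stage (dens a b r))).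
Proof.
  intros Hab. destruct (xs_good (stage (dens a b r))) as [H1 _].
  rewrite sigma_stage in H1. simpl in H1. split.
  - apply H1; auto.
  - right. exists (stage (dens a b r)). split.
    + left. rewrite sigma_stage. reflexivity.
    + apply Tstar_refl.
Qed.

Lemma xs_inj_dens i i' : xs i = xs i' -> sigma i' 0%nat = 0 -> sigma i 0%nat = 0 -> i = i'.
Proof.
  intros E H' H.
  destruct (Htri i i') as [L|[Eq|L]]; auto; exfalso.
  - destruct (xs_good i') as [_ [G _]]. apply G. right. exists i. split; auto.
    left. rewrite E. apply Tstar_refl.
  - destruct (xs_good i) as [_ [G _]]. apply G. right. exists i'. split; auto.
    left. rewrite E. apply Tstar_refl.
Qed.

Lemma FF_cdense P : c_dense (FF P).
Proof.
  intros a b Hab.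
  set (g := fun r => exist (fun x => a < x < b /\ FF P x) (xs (stage (dens a b r)))
                     (let H := dens_in P a b r Hab in conj (proj1 H) (proj2 H))).
  destruct (schroeder_bernstein (@proj1_sig _ (fun x => a < x < b /\ FF P x)) g) as [h [h1 h2]].
  - intros [x hx] [y hy] E. simpl in E. subst. f_equal. apply proof_irrelevance.
  - intros r r' E. unfold g in E. apply (f_equal (@proj1_sig _ _)) in E. simpl in E.
    apply xs_inj_dens in E; try (rewrite sigma_stage; reflexivity).
    apply (f_equal sigma) in E. rewrite !sigma_stage in E.
    exact (f_equal (fun s => s 3%nat) E).
  - exists h. split; auto.
Qed.

Lemma FF_dense P a b : a < b -> exists w, a < w < b /\ FF P w.
Proof.
  intros Hab. exists (xs (stage (dens a b 0))). apply dens_in; auto.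
Qed.

Lemma FF_rat P n : FF P (rat_of_nat n).
Proof. left. exists n. apply Tstar_refl. Qed.

Lemma noniso P Q p phi : P p -> ~ Q p -> iso (FF P) (FF Q) phi -> False.
Proof.
  intros Pp Qp Hiso.
  set (k := fun n => phi (rat_of_nat n)).
  set (s := fun n => match n with O => 1 | S O => p | S (S m) => k m end).
  set (i := stage s).
  assert (Si : sigma i = s) by apply sigma_stage.
  assert (Hsi : Hs i = Hk k).
  { unfold Hs. rewrite Si. reflexivity. }
  assert (Km : kmono k) by (apply (iso_kmono (FF P) (FF Q)); auto; apply FF_rat).
  assert (Hinj : injective (Hs i)).
  { rewrite Hsi. intros a b E. destruct (Rtotal_order a b) as [L|[Eq|L]]; auto.
    - apply (Hk_strict k) in L; auto. lra.
    - apply (Hk_strict k) in L; auto. lra. }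
  destruct (xs_good i) as [_ [G1 G2]].
  assert (G3 : ~ U i (Hs i (xs i))).
  { apply G2; auto. rewrite Si. simpl. lra. }
  assert (FPx : FF P (xs i)).
  { right. exists i. split; [|apply Tstar_refl]. right. rewrite Si. simpl. split; [lra|exact Pp]. }
  assert (Eq : phi (xs i) = Hs i (xs i)).
  { rewrite Hsi. symmetry. apply (Hk_eq (FF P) (FF Q)); auto.
    - apply FF_rat.
    - apply FF_dense. }
  destruct Hiso as [H1 _].
  assert (FQ := H1 _ FPx). rewrite Eq in FQ.
  destruct FQ as [Hd|[j [Hj Hjx]]].
  - apply G3. left. exact Hd.
  - destruct (Htri j i) as [L|[E|L]].
    + apply G3. right. exists j. split; auto.
    + subst j. destruct Hj as [Hj|[_ Hj]]; rewrite Si in Hj; simpl in Hj.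
      * lra.
      * contradiction.
    + destruct (xs_good j) as [_ [G _]]. apply G. right. exists i. split; auto.
      right. apply Tstar_sym. exact Hjx.
Qed.

Lemma FF_distinct P Q : P <> Q -> ~ order_isomorphic (FF P) (FF Q).
Proof.
  intros Hne Hiso.
  destruct (iso_of_order_iso _ _ Hiso) as [phi Hphi].
  assert (Ex : exists p, ~ (P p <-> Q p)).
  { apply NNPP. intro H. apply Hne. apply functional_extensionality. intro p.
    apply propositional_extensionality. apply NNPP. intro H'. apply H. exists p. exact H'. }
  destruct Ex as [p Hp].
  destruct (classic (P p)) as [Pp|Pp]; destruct (classic (Q p)) as [Qp|Qp].
  - apply Hp. tauto.
  - exact (noniso P Q p phi Pp Qp Hphi).
  - destruct (iso_sym _ _ _ Hphi) as [psi Hpsi]. exact (noniso Q P p psi Qp Pp Hpsi).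
  - apply Hp. tauto.
Qed.

End Main.

From mathcomp Require ssreflect ssrbool eqtype boolp wochoice.
Module WO.
Import ssreflect ssrbool eqtype boolp.
Lemma wo_C : exists le : CS -> CS -> Prop,
  (forall S : CS -> Prop, (exists x, S x) -> exists z, S z /\ forall w, S w -> le z w) /\
  (forall x y, le x y -> le y x -> x = y).
Proof.
  destruct (@wochoice.well_ordering_principle {classic CS}) as [le H].
  exists (fun x y => le x y = true).
  assert (Hmin : forall S : CS -> Prop, (exists x, S x) ->
     exists z, S z /\ (forall w, S w -> le z w = true) /\
       (forall z', S z' -> (forall w, S w -> le z' w = true) -> z' = z)).
  { intros S [x Sx].
    have [z [[Az Lz] Uz]] := H (fun c => `[< S c >]) (ex_intro _ x (asboolT Sx)).
    exists z; split; [exact: (asboolW Az)|split].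
    - by move=> w Sw; apply: Lz; apply: asboolT.
    - move=> z' Sz' Lz'. symmetry. apply: Uz. split; first exact: asboolT.
      move=> w /asboolW; exact: Lz'. }
  split.
  - intros S HS. destruct (Hmin S HS) as [z [Sz [Lz _]]]. exists z. split; auto.
  - intros x y Hxy Hyx.
    assert (Rx : le x x = true).
    { destruct (Hmin (fun c => c = x) (ex_intro _ x (@Logic.eq_refl _ x))) as [z [-> [Lz _]]]. by apply Lz. }
    assert (Ry : le y y = true).
    { destruct (Hmin (fun c => c = y) (ex_intro _ y (@Logic.eq_refl _ y))) as [z [-> [Lz _]]]. by apply Lz. }
    destruct (Hmin (fun c => c = x \/ c = y) (ex_intro _ x (or_introl (@Logic.eq_refl _ x)))) as [z [Sz [Lz Uz]]].
    have ex : x = z by apply Uz; [left|move=> w [->|->]].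
    have ey : y = z by apply Uz; [right|move=> w [->|->]].
    by rewrite ex ey.
Qed.
End WO.

Lemma good_order : exists (I : Type) (lt : I -> I -> Prop),
  well_founded lt /\ (forall a b, lt a b \/ a = b \/ lt b a) /\
  (forall i, small (fun j => lt j i)) /\ (exists e : CS -> I, injective e).
Proof.
  destruct WO.wo_C as [le [Hmin Hanti]].
  assert (Hrefl : forall x, le x x).
  { intro x. destruct (Hmin (fun c => c = x) (ex_intro _ x eq_refl)) as [z [-> Hz]]. auto. }
  assert (Htot : forall x y, le x y \/ le y x).
  { intros x y. destruct (Hmin (fun c => c = x \/ c = y) (ex_intro _ x (or_introl eq_refl)))
      as [z [[->| ->] Hz]]; [left|right]; apply Hz; auto. }
  set (lt := fun x y => le x y /\ x <> y).
  assert (Hwf : well_founded lt).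
  { intro a. apply NNPP. intro Ha.
    destruct (Hmin (fun z => ~ Acc lt z) (ex_intro _ a Ha)) as [z [Hz Lz]].
    apply Hz. constructor. intros w [Hw1 Hw2]. apply NNPP. intro Hw.
    apply Hw2. apply Hanti; auto. }
  assert (Htri : forall a b, lt a b \/ a = b \/ lt b a).
  { intros a b. destruct (classic (a = b)) as [E|E]; auto.
    destruct (Htot a b); [left|right;right]; split; auto. }
  destruct (classic (forall z, small (fun j => lt j z))) as [Hall|Hnot].
  - exists CS, lt. split; auto. split; auto. split; auto.
    exists (fun c => c). intros a b E; exact E.
  - apply not_all_ex_not in Hnot.
    destruct (Hmin (fun z => ~ small (fun j => lt j z)) Hnot) as [z0 [Hz0 Lz0]].
    exists {c : CS | lt c z0}, (fun i j => lt (proj1_sig i) (proj1_sig j)).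
    split; [|split; [|split]].
    + apply wf_inverse_image. exact Hwf.
    + intros [a Ha] [b Hb]. simpl. destruct (Htri a b) as [H|[H|H]]; auto.
      right; left. subst. f_equal. apply proof_irrelevance.
    + intros [x Hx]. simpl. intros [g [gi gS]].
      assert (Sx : ~ small (fun j => lt j x)).
      { intros Hs. apply Hs. exists (fun c => proj1_sig (g c)). split; auto.
        intros c c' E. apply gi. destruct (g c), (g c'). simpl in E. subst.
        f_equal. apply proof_irrelevance. }
      destruct Hx as [Hx1 Hx2]. apply Hx2. apply Hanti; auto.
    + apply NNPP in Hz0. destruct Hz0 as [g [gi gS]].
      exists (fun c => exist _ (g c) (gS c)).
      intros c c' E. apply gi. exact (f_equal (@proj1_sig _ _) E).
Qed.


Theorem mainTheorem11 :
  exists F : (R -> Prop) -> (R -> Prop),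
    (forall P, c_dense (F P) /\ closed_under_Turing_equiv (F P)) /\
    (forall P Q, P <> Q -> ~ order_isomorphic (F P) (F Q)).
Proof.
  destruct good_order as [I [lt [wf [tri [seg [e ei]]]]]].
  exists (FF I lt wf e). split.
  - intro P. split.
    + exact (FF_cdense I lt wf tri seg e ei P).
    + exact (FF_closed I lt wf e P).
  - intros P Q H. exact (FF_distinct I lt wf tri seg e ei P Q H).
Qed.
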